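(* Let $\mathcal A$ be a weakly amenable Banach algebra. Suppose that for each closed two-sided ideal $I$ of $\mathcal A$ at least one of the following holds: (i) the short exact sequence of Banach $\mathcal A$-bimodules $\{0\}\longrightarrow I^\perp\overset{i}{\longrightarrow}\mathcal A^*\overset{\pi}{\longrightarrow}\mathcal A^*/I^\perp\longrightarrow\{0\}$ splits; (ii) the short exact sequence of Banach $\mathcal A$-bimodules $\{0\}\longrightarrow I\overset{i}{\longrightarrow}\mathcal A\overset{\pi}{\longrightarrow}\mathcal A/I\longrightarrow\{0\}$ splits. Then $\mathcal A$ is ideally amenable.
   Context: Here $I^\perp=\{f\in\mathcal A^*: f|_I=0\}$, $i$ denotes inclusion and $\pi$ the quotient map. Duals of Banach $\mathcal A$-bimodules carry the actions $\langle x,a\cdot x^*\rangle=\langle x\cdot a,x^*\rangle$, $\langle x,x^*\cdot a\rangle=\langle a\cdot x,x^*\rangle$. A derivation $D:\mathcal A\to Z$ is a continuous linear map with $D(ab)=a\cdot D(b)+D(a)\cdot b$; it is inner if $D(a)=a\cdot z-z\cdot a$ for some $z\in Z$; $H^1(\mathcal A,Z)=\{0\}$ means every derivation $\mathcal A\to Z$ is inner. $\mathcal A$ is weakly amenable if $H^1(\mathcal A,\mathcal A^* )=\{0\}$, and ideally amenable if $H^1(\mathcal A,I^* )=\{0\}$ for every closed two-sided ideal $I$ of $\mathcal A$. A short exact sequence $\{0\}\to Y\to X\overset{\pi}{\to}X/Y\to\{0\}$ of Banach $\mathcal A$-bimodules splits if $\pi$ has a bounded right inverse which is an $\mathcal A$-bimodule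 homomorphism. *)

(* Defs.v *)
From mathcomp Require Import all_boot all_algebra.
From mathcomp Require Import all_classical all_reals all_analysis.
From mathcomp.real_closed Require Export complex.
Export numFieldNormedType.Exports.

Set Implicit Arguments.
Unset Strict Implicit.
Unset Printing Implicit Defensive.
Import GRing.Theory Num.Theory.
Local Open Scope ring_scope.
Local Open Scope classical_set_scope.

Section Defs.
Variables (R : realType) (A : completeNormedModType R[i]) (mul : A -> A -> A).
Local Notation K := R[i].

Definition banach_algebra : Prop :=
  [/\ (forall a b c, mul a (mul b c) = mul (mul a b) c),
      (forall (k : K) a b c, mul (k *: a + b) c = k *: mul a c + mul b c),
      (forall (k : K) a b c, mul a (k *: b + c) = k *: mul a b + mul a c)
    & (forall a b, `|mul a b| <= `|a| * `|b|)].

Definition closed_ideal (I : set A) : Prop :=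
  [/\ I 0, (forall (k : K) x y, I x -> I y -> I (k *: x + y)),
      closed I,
      (forall a x, I x -> I (mul a x)) & (forall a x, I x -> I (mul x a))].

Definition linear_on (S : set A) (f : A -> K) : Prop :=
  forall (k : K) x y, S x -> S y -> f (k *: x + y) = k * f x + f y.

Definition bounded_by_on (S : set A) (f : A -> K) (M : K) : Prop :=
  forall x, S x -> `|f x| <= M * `|x|.

(* Elements of the dual I^* are represented by functions f : A -> K, of which
   only the restriction to I matters; it must be linear and bounded on I.
   The dual actions are <x, a.f> = <x.a, f>, <x, f.a> = <a.x, f>.
   A derivation D : A -> I^* (continuous linear, Leibniz rule);
   identities between elements of I^* are tested on I. *)
Definition derivation_into_dual (I : set A) (D : A -> A -> K) : Prop :=
  [/\ (forall a, linear_on I (D a)),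
      (forall (k : K) a b x, I x -> D (k *: a + b) x = k * D a x + D b x),
      (exists C : K, forall a x, I x -> `|D a x| <= C * `|a| * `|x|)
    & (forall a b x, I x -> D (mul a b) x = D b (mul x a) + D a (mul b x))].

Definition inner_into_dual (I : set A) (D : A -> A -> K) : Prop :=
  exists f : A -> K,
    [/\ linear_on I f, (exists M : K, bounded_by_on I f M)
      & forall a x, I x -> D a x = f (mul x a) - f (mul a x)].

Definition H1_dual_trivial (I : set A) : Prop :=
  forall D, derivation_into_dual I D -> inner_into_dual I D.

Definition weakly_amenable : Prop := H1_dual_trivial setT.

Definition ideally_amenable : Prop :=
  forall I, closed_ideal I -> H1_dual_trivial I.

Definition in_dual (f : A -> K) : Prop :=
  linear_on setT f /\ exists M : K, bounded_by_on setT f M.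

Definition annihilator (I : set A) (f : A -> K) : Prop :=
  in_dual f /\ forall x, I x -> f x = 0.

(* Splitting of 0 -> I -> A -> A/I -> 0.  A bounded right inverse
   sigma : A/I -> A of the quotient map that is a bimodule homomorphism is
   encoded as s = sigma \o pi : A -> A, i.e. a map constant on cosets of I
   with pi (s x) = pi x, linear, bimodule hom, and bounded for the quotient
   norm ||x + I|| = inf_{y in I} ||x + y||. *)
Definition splits_ideal (I : set A) : Prop :=
  exists s : A -> A,
    [/\ (forall x y, I (x - y) -> s x = s y),
        (forall x, I (s x - x)),
        (forall (k : K) x y, s (k *: x + y) = k *: s x + s y),
        (forall a x, s (mul a x) = mul a (s x) /\ s (mul x a) = mul (s x) a)
      & (exists C : K, forall x y, I y -> `|s x| <= C * `|x + y|)].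

(* Splitting of 0 -> I^perp -> A^* -> A^*/I^perp -> 0, encoded likewise as
   S = sigma \o pi on A^*.  Module actions on A^*: (a.f)(x) = f(x a),
   (f.a)(x) = f(a x).  Boundedness w.r.t. the quotient norm
   ||f + I^perp|| = inf_{g in I^perp} ||f + g||, with ||.|| the dual norm
   (||h|| <= M iff |h x| <= M ||x|| for all x). *)
Definition splits_annihilator (I : set A) : Prop :=
  exists S : (A -> K) -> (A -> K),
    (forall f, in_dual f -> in_dual (S f)) /\
    [/\ (forall f g, in_dual f -> in_dual g -> annihilator I (f \- g) ->
                     S f = S g),
        (forall f, in_dual f -> annihilator I (S f \- f)),
        (forall (k : K) f g, in_dual f -> in_dual g ->
           S (fun x => k * f x + g x) = (fun x => k * S f x + S g x)),
        (forall a f, in_dual f ->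
           S (fun x => f (mul x a)) = (fun x => S f (mul x a)) /\
           S (fun x => f (mul a x)) = (fun x => S f (mul a x)))
      & (exists C : K, forall f g M, in_dual f -> annihilator I g ->
           bounded_by_on setT (f \+ g) M ->
           bounded_by_on setT (S f) (C * M))].

End Defs.

(* Main.v *)
From HB Require Import structures.
Require Import Defs.
From mathcomp Require Import all_boot all_algebra.
From mathcomp Require Import all_classical all_reals all_analysis.
From mathcomp Require Import lra ring.
From mathcomp.real_closed Require Import complex.
Import numFieldNormedType.Exports.
Import order.Order.TTheory GRing.Theory Num.Theory.
Local Open Scope ring_scope.
Local Open Scope classical_set_scope.

Section RealHB.
Variables (R : realType) (V : lmodType R) (p : V -> R).
Hypothesis pD : forall x y, p (x + y) <= p x + p y.
Hypothesis pZ : forall r x, 0 < r -> p (r *: x) = r * p x.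

Definition subsp (D : set V) := D 0 /\ forall r x y, D x -> D y -> D (r *: x + y).
Definition lin_on (D : set V) (g : V -> R) :=
  forall r x y, D x -> D y -> g (r *: x + y) = r * g x + g y.

Lemma subspZ {D} r {x} : subsp D -> D x -> D (r *: x).
Proof. by move=> [D0 DD] Dx; rewrite -[_ *: x]addr0; apply: DD. Qed.
Lemma subspD {D x y} : subsp D -> D x -> D y -> D (x + y).
Proof. by move=> [D0 DD] Dx Dy; rewrite -[x]scale1r; apply: DD. Qed.
Lemma lin0 {D g} : subsp D -> lin_on D g -> g 0 = 0.
Proof.
move=> [D0 _] lg; have := lg 1 0 0 D0 D0; rewrite scale1r addr0 mul1r.
by move=> h; apply: (addrI (g 0)); rewrite addr0 -h.
Qed.
Lemma linZ {D g} r {x} : subsp D -> lin_on D g -> D x -> g (r *: x) = r * g x.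
Proof.
move=> sD lg Dx; have := lg r x 0 Dx (proj1 sD).
by rewrite addr0 (lin0 sD lg) addr0.
Qed.
Lemma linD {D g x y} : subsp D -> lin_on D g -> D x -> D y -> g (x + y) = g x + g y.
Proof. by move=> sD lg Dx Dy; have := lg 1 x y Dx Dy; rewrite scale1r mul1r. Qed.

Record pext := PExt { pdom : set V; pfun : V -> R }.
Definition good (e : pext) := [/\ subsp (pdom e), lin_on (pdom e) (pfun e)
  & forall x, pdom e x -> pfun e x <= p x].
Definition ext_le (e1 e2 : pext) := pdom e1 `<=` pdom e2 /\
  forall x, pdom e1 x -> pfun e2 x = pfun e1 x.

Lemma one_step e x0 : good e -> ~ pdom e x0 ->
  exists e', [/\ good e', ext_le e e' & pdom e' x0].
Proof.
case=> sD lg gp nx0.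
set D := pdom e in sD lg gp nx0 *; set g := pfun e in lg gp *.
have key w w' : D w -> D w' -> g w - p (w - x0) <= p (w' + x0) - g w'.
  move=> Dw Dw'; rewrite lerBrDr addrAC lerBlDr -(linD sD lg) //.
  apply: le_trans (gp _ (subspD sD Dw Dw')) _.
  rewrite (_ : w + w' = (w - x0) + (w' + x0)); first by rewrite addrC; exact: pD.
  by rewrite addrACA addNr addr0.
set L := [set g w - p (w - x0) | w in D].
have L0 : L !=set0 by exists (g 0 - p (0 - x0)), 0; first exact: (proj1 sD).
have Lub : ubound L (p (0 + x0) - g 0) by move=> _ [w Dw <-]; apply: key => //; exact: (proj1 sD).
set c := sup L.
have c1 w : D w -> g w - p (w - x0) <= c.
  by move=> Dw; apply: ub_le_sup; [exists (p (0 + x0) - g 0) | exists w].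
have c2 w : D w -> c <= p (w + x0) - g w.
  by move=> Dw; apply: ge_sup => // _ [w' Dw' <-]; apply: key.
have uniq w w' r r' : D w -> D w' -> w + r *: x0 = w' + r' *: x0 -> r = r' /\ w = w'.
  move=> Dw Dw' E.
  have rr : r = r'.
    apply/eqP; apply/negPn/negP => nrr; apply: nx0.
    have -> : x0 = (r - r')^-1 *: (w' - w).
      apply: (@scalerI _ _ (r - r')); first by rewrite subr_eq0.
      rewrite scalerA mulfV ?subr_eq0 // scale1r scalerBl.
      by rewrite -(addKr w (r *: x0)) E addrA addrK addrC.
    apply: subspZ => //; apply: subspD => //; rewrite -scaleN1r; exact: (subspZ (-1) sD Dw).
  by split=> //; move: E; rewrite rr => /addIr.
set D' := [set v | exists w r, D w /\ v = w + r *: x0].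
pose g' v := xget 0 [set y | exists w r, [/\ D w, v = w + r *: x0 & y = g w + r * c]].
have g'E w r : D w -> g' (w + r *: x0) = g w + r * c.
  move=> Dw; rewrite /g'; case: xgetP.
    by move=> y _ [w' [r' [Dw' /(uniq _ _ _ _ Dw Dw') [-> ->] ->]]].
  by move=> /(_ (g w + r * c)) []; exists w, r.
have sD' : subsp D'.
  split; first by exists 0, 0; rewrite scale0r addr0; split=> //; exact: (proj1 sD).
  move=> k _ _ [w [r [Dw ->]]] [w' [r' [Dw' ->]]].
  exists (k *: w + w'), (k * r + r'); split; first by apply: (proj2 sD).
  by rewrite scalerDr scalerDl scalerA addrACA.
exists (PExt D' g'); split.
- split => //=.
  + move=> k _ _ [w [r [Dw ->]]] [w' [r' [Dw' ->]]].
    rewrite (_ : k *: (w + r *: x0) + (w' + r' *: x0) = (k *: w + w') + (k * r + r') *: x0); last first.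
      by rewrite scalerDr scalerDl scalerA addrACA.
    rewrite !g'E //; last by apply: (proj2 sD).
    by rewrite (lg _ _ _ Dw Dw') mulrDl mulrDr mulrA addrACA.
  + move=> _ [w [r [Dw ->]]]; rewrite g'E //.
    have [r0|r0|->] := ltgtP r 0; last by rewrite scale0r mul0r !addr0; apply: gp.
    * set s := - r; have s0 : 0 < s by rewrite oppr_gt0.
      have -> : w + r *: x0 = s *: (s^-1 *: w - x0).
        by rewrite scalerBr scalerA mulfV ?gt_eqF // scale1r /s scaleNr opprK.
      rewrite pZ //; have := c1 _ (subspZ (s^-1) sD Dw).
      rewrite (linZ _ sD lg Dw) => h.
      have -> : r = - s by rewrite opprK.
      have h2 : s * (s^-1 * g w - p (s^-1 *: w - x0)) <= s * c by rewrite ler_pM2l.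
      rewrite mulrBr mulrA mulfV ?gt_eqF // mul1r in h2.
      rewrite mulNr; lra.
    * have -> : w + r *: x0 = r *: (r^-1 *: w + x0).
        by rewrite scalerDr scalerA mulfV ?gt_eqF // scale1r.
      rewrite pZ //; have := c2 _ (subspZ (r^-1) sD Dw).
      rewrite (linZ _ sD lg Dw) => h.
      have h2 : r * c <= r * (p (r^-1 *: w + x0) - r^-1 * g w) by rewrite ler_pM2l.
      rewrite mulrBr mulrA mulfV ?gt_eqF // mul1r in h2.
      lra.
- split => /= w Dw; first by exists w, 0; rewrite scale0r addr0.
  by have := g'E w 0 Dw; rewrite scale0r mul0r !addr0.
- by exists 0, 1; rewrite scale1r add0r; split => //; exact: (proj1 sD).
Qed.


Lemma ext_le_trans a b c : ext_le a b -> ext_le b c -> ext_le a c.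
Proof.
move=> [ab fab] [bc fbc]; split; first exact: subset_trans bc.
by move=> x ax; rewrite fbc ?fab //; apply: ab.
Qed.

Theorem real_HB (W : set V) (f : V -> R) :
  subsp W -> lin_on W f -> (forall x, W x -> f x <= p x) ->
  exists F : V -> R, [/\ lin_on setT F, (forall x, W x -> F x = f x)
                       & forall x, F x <= p x].
Proof.
move=> sW lf fp.
pose T := {e : pext | good e /\ ext_le (PExt W f) e}.
pose Rl (s t : T) := `[< ext_le (sval s) (sval t) >].
have t0 : T by exists (PExt W f); split; [by split|by split].
have [|||t tmax] := @ZL_preorder T t0 Rl.
- by move=> s; apply/asboolP; split.
- by move=> a b c /asboolP ab /asboolP bc; apply/asboolP; apply: ext_le_trans ab bc.
- move=> A tot.
  have [[s0 As0]|A0] := pselect (A !=set0); last first.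
    by exists t0 => s As; exfalso; apply: A0; exists s.
  have tot' s1 s2 : A s1 -> A s2 -> ext_le (sval s1) (sval s2) \/ ext_le (sval s2) (sval s1).
    by move=> A1 A2; case: (tot _ _ A1 A2) => /asboolP; [left|right].
  have common s1 s2 : A s1 -> A s2 -> exists s, [/\ A s, pdom (sval s1) `<=` pdom (sval s)
     & pdom (sval s2) `<=` pdom (sval s)].
    move=> A1 A2; case: (tot' _ _ A1 A2) => [[h _]|[h _]].
      by exists s2; split.
    by exists s1; split.
  pose dom := [set x | exists s, A s /\ pdom (sval s) x].
  pose g x := xget 0 [set y | exists s, [/\ A s, pdom (sval s) x & pfun (sval s) x = y]].
  have gE s x : A s -> pdom (sval s) x -> g x = pfun (sval s) x.
    move=> As Dx; rewrite /g; case: xgetP.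
      move=> y _ [s' [As' Dx' <-]].
      by case: (tot' _ _ As As') => [[_ ->]|[_ ->]].
    by move=> /(_ (pfun (sval s) x)) []; exists s.
  have gs (s : T) : good (sval s) by exact: (proj1 (svalP s)).
  have ge : good (PExt dom g).
    split => /=.
    + split; first by exists s0; split => //; case: (gs s0) => -[].
      move=> r x y [s1 [A1 D1]] [s2 [A2 D2]].
      have [s [As h1 h2]] := common _ _ A1 A2.
      exists s; split => //; case: (gs s) => -[_ + _ _]; apply; [exact: h1|exact: h2].
    + move=> r x y [s1 [A1 D1]] [s2 [A2 D2]].
      have [s [As h1 h2]] := common _ _ A1 A2.
      have [sD lg _] := gs s.
      have Dx := h1 _ D1; have Dy := h2 _ D2.
      rewrite (gE s _ As (proj2 sD _ _ _ Dx Dy)) (gE s _ As Dx) (gE s _ As Dy).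
      exact: lg.
    + move=> x [s [As Dx]]; rewrite (gE s) //; case: (gs s) => _ _ h; exact: h.
  have ext0 : ext_le (PExt W f) (PExt dom g).
    have [hW hf] := proj2 (svalP s0).
    split => /= z Wz; first by exists s0; split => //; apply: hW.
    by rewrite (gE s0) //=; [apply: hf|apply: hW].
  exists (exist _ (PExt dom g) (conj ge ext0)) => s As; apply/asboolP; split => /=.
    by move=> x Dx; exists s.
  by move=> x Dx; apply: gE.
have full x : pdom (sval t) x.
  case: (pselect (pdom (sval t) x)) => // nx.
  have [e' [ge' le' De']] := one_step _ _ (proj1 (svalP t)) nx.
  pose s : T := exist _ e' (conj ge' (ext_le_trans _ _ _ (proj2 (svalP t)) le')).
  have /asboolP [h _] := tmax s (asboolT le').
  exact: h.
have [[_ lg gp] [hW hf]] := svalP t.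
exists (pfun (sval t)); split.
- by move=> r x y _ _; apply: lg.
- by move=> x Wx; apply: hf.
- by move=> x; apply: gp.
Qed.

End RealHB.

Local Open Scope complex_scope.

Section CX.
Variables (R : realType) (A : normedModType R[i]).
Definition realA : Type := A.
HB.instance Definition _ := GRing.Zmodule.on realA.
Definition rscale (r : R) (x : realA) : realA := (r%:C *: (x : A)).
Lemma rscaleA a b v : rscale a (rscale b v) = rscale (a * b) v.
Proof. by rewrite /rscale scalerA rmorphM. Qed.
Lemma rscale1 : left_id 1 rscale.
Proof. by move=> v; rewrite /rscale rmorph1 scale1r. Qed.
Lemma rscaleDr : right_distributive rscale +%R.
Proof. by move=> a u v; rewrite /rscale scalerDr. Qed.
Lemma rscaleDl v : {morph rscale^~ v : a b / a + b}.
Proof. by move=> a b; rewrite /rscale rmorphD scalerDl. Qed.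
HB.instance Definition _ := GRing.Zmodule_isLmodule.Build R realA rscaleA rscale1 rscaleDr rscaleDl.

Lemma CD (a b : R) : (a + b)%:C = a%:C + b%:C :> R[i].
Proof. exact: rmorphD. Qed.
Lemma CM (a b : R) : (a * b)%:C = a%:C * b%:C :> R[i].
Proof. exact: rmorphM. Qed.
Definition nrm (x : A) : R := complex.Re `|x|.
Lemma nrmE x : `|x| = (nrm x)%:C.
Proof. by rewrite /nrm RRe_real // normr_real. Qed.
Lemma nrm_ge0 x : 0 <= nrm x.
Proof. by rewrite -ler0c -nrmE. Qed.
Lemma nrmD x y : nrm (x + y) <= nrm x + nrm y.
Proof. by rewrite -lecR CD -!nrmE ler_normD. Qed.
Lemma nrmZ r x : 0 <= r -> nrm (r%:C *: x) = r * nrm x.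
Proof.
move=> r0; apply: complexI; rewrite CM -!nrmE normrZ ger0_norm //.
by rewrite ler0c.
Qed.
Lemma ReD (a b : R[i]) : complex.Re (a + b) = complex.Re a + complex.Re b.
Proof. by case: a; case: b. Qed.
Lemma ReM (r : R) (z : R[i]) : complex.Re (r%:C * z) = r * complex.Re z.
Proof. by case: z => a b /=; rewrite mul0r subr0. Qed.
Lemma CN (a : R) : (- a)%:C = - a%:C :> R[i].
Proof. exact: rmorphN. Qed.
Lemma CN1 : (-1)%:C = -1 :> R[i].
Proof. exact: rmorphN1. Qed.
Lemma ReF (a b : R) : complex.Re (a%:C - 'i%C * b%:C) = a.
Proof. by simpc. Qed.
Lemma ReCr (r : R) : complex.Re r%:C = r. Proof. by []. Qed.

Lemma complex_HB (I : set A) (f : A -> R[i]) (M : R) :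
  0 <= M -> I 0 -> (forall k x y, I x -> I y -> I (k *: x + y)) ->
  (forall k x y, I x -> I y -> f (k *: x + y) = k * f x + f y) ->
  (forall x, I x -> `|f x| <= M%:C * `|x|) ->
  exists F : A -> R[i], [/\ (forall k x y, F (k *: x + y) = k * F x + F y),
    (forall x, I x -> F x = f x) & (forall x, `|F x| <= M%:C * `|x|)].
Proof.
move=> M0 I0 Ilin flin fb.
pose p (x : realA) := M * nrm x.
pose W : set realA := I.
pose u (x : realA) := complex.Re (f x).
have [|||||F0 [F0lin F0u F0p]] := @real_HB R realA p _ _ W u.
- by move=> x y; rewrite /p -mulrDr ler_wpM2l // nrmD.
- by move=> r x r0; rewrite /p nrmZ ?ltW // mulrCA.
- by split => // r x y Wx Wy; apply: Ilin.
- by move=> r x y Wx Wy; rewrite /u flin // ReD ReM.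
- move=> x Wx; rewrite /u /p; apply: le_trans (ler_norm _) _.
  rewrite -lecR; apply: le_trans (normc_ge_Re _) _.
  by rewrite CM -nrmE; apply: fb.
have F00 : F0 0 = 0.
  have := F0lin 1 0 0 Logic.I Logic.I; rewrite scale1r addr0 mul1r => h.
  by apply: (addrI (F0 0)); rewrite addr0 -h.
have F0Z r (x : A) : F0 (r%:C *: x) = r * F0 x.
  by have := F0lin r x 0 Logic.I Logic.I; rewrite addr0 F00 addr0.
have F0D (x y : A) : F0 (x + y) = F0 x + F0 y.
  by have := F0lin 1 x y Logic.I Logic.I; rewrite scale1r mul1r.
have F0N (x : A) : F0 (- x) = - F0 x.
  by have := F0Z (-1) x; rewrite CN1 scaleN1r mulN1r.
pose F (x : A) := (F0 x)%:C - 'i%C * (F0 ('i%C *: x))%:C.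
have FD x y : F (x + y) = F x + F y.
  by rewrite /F scalerDr !F0D !CD; ring.
have FZr r x : F (r%:C *: x) = r%:C * F x.
  rewrite /F; have -> : 'i%C *: (r%:C *: x) = r%:C *: ('i%C *: x) by rewrite !scalerA mulrC.
  by rewrite !F0Z !CM; ring.
have Fi x : F ('i%C *: x) = 'i%C * F x.
  rewrite /F scalerA -expr2 sqr_i scaleN1r F0N CN mulrBr mulrA -expr2 sqr_i; ring.
have FZ k x : F (k *: x) = k * F x.
  have -> : k *: x = (complex.Re k)%:C *: x + (complex.Im k)%:C *: ('i%C *: x).
    by rewrite scalerA [_ * 'i%C]mulrC -scalerDl -complexE.
  rewrite FD !FZr Fi.
  transitivity (((complex.Re k)%:C + 'i%C * (complex.Im k)%:C) * F x); first ring.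
  by rewrite -complexE.
have f0 : f 0 = 0.
  have := flin 1 0 0 I0 I0; rewrite scale1r addr0 mul1r => h.
  by apply: (addrI (f 0)); rewrite addr0 -h.
exists F; split.
- by move=> k x y; rewrite FD FZ.
- move=> x Ix.
  have Iix : I ('i%C *: x) by rewrite -[_ *: x]addr0; apply: Ilin.
  have fi : f ('i%C *: x) = 'i%C * f x by rewrite -[_ *: x]addr0 flin // f0 addr0.
  rewrite /F (F0u _ Ix) (F0u _ Iix) /u fi ['i%C * f x]mulrC ReiNIm CN mulrN opprK.
  by rewrite -complexE.
- move=> x; have [->|z0] := eqVneq (F x) 0.
    by rewrite normr0 mulr_ge0 // ler0c.
  set z := F x in z0 *.
  pose l := conjc z / `|z|.
  have nz : `|z| != 0 by rewrite normr_eq0.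
  have Fl : F (l *: x) = `|z|.
    by rewrite FZ -/z /l mulrAC [conjc z * z]mulrC -sqr_normc expr2 -mulrA divff // mulr1.
  have hnl : nrm (l *: x) = nrm x.
    by apply: complexI; rewrite -!nrmE normrZ /l normrM normfV normr_id normcJ divff // mul1r.
  have h : complex.Re `|z| <= M * nrm x.
    rewrite -hnl -Fl /F ReF; apply: F0p.
  by rewrite -lecR CM -nrmE in h; rewrite RRe_real // normr_real in h.
Qed.
End CX.

Section Main.
Variables (R : realType) (A : completeNormedModType R[i]) (mul : A -> A -> A).
Local Notation K := R[i].
Hypothesis BA : banach_algebra mul.

Lemma le_normK {V : normedZmodType K} {z : V} {c : K} : `|z| <= c -> `|z| <= `|c|.
Proof. by move=> h; rewrite (@ger0_norm _ c) //; exact: (le_trans (normr_ge0 z) h). Qed.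

Lemma bnd_norm (S : set A) (f : A -> K) M : bounded_by_on S f M -> bounded_by_on S f `|M|.
Proof.
move=> h x Sx; have := le_normK (h x Sx).
by rewrite normrM normr_id.
Qed.

Lemma bmulDl a b c : mul (a + b) c = mul a c + mul b c.
Proof. by case: BA => _ h _ _; have := h 1 a b c; rewrite !scale1r. Qed.
Lemma bmulDr a b c : mul a (b + c) = mul a b + mul a c.
Proof. by case: BA => _ _ h _; have := h 1 a b c; rewrite !scale1r. Qed.
Lemma bmul0l c : mul 0 c = 0.
Proof. by have := bmulDl 0 0 c; rewrite addr0 => h; apply: (addrI (mul 0 c)); rewrite addr0 -h. Qed.
Lemma bmul0r c : mul c 0 = 0.
Proof. by have := bmulDr c 0 0; rewrite addr0 => h; apply: (addrI (mul c 0)); rewrite addr0 -h. Qed.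
Lemma bmulZl k a c : mul (k *: a) c = k *: mul a c.
Proof. by case: BA => _ h _ _; have := h k a 0 c; rewrite !addr0 bmul0l addr0. Qed.
Lemma bmulZr k a c : mul a (k *: c) = k *: mul a c.
Proof. by case: BA => _ _ h _; have := h k a c 0; rewrite !addr0 bmul0r addr0. Qed.
Lemma bmulNl a c : mul (- a) c = - mul a c.
Proof. by rewrite -scaleN1r bmulZl scaleN1r. Qed.
Lemma bmulNr a c : mul a (- c) = - mul a c.
Proof. by rewrite -scaleN1r bmulZr scaleN1r. Qed.
Lemma bmulBl a b c : mul (a - b) c = mul a c - mul b c.
Proof. by rewrite bmulDl bmulNl. Qed.
Lemma bmulBr a b c : mul a (b - c) = mul a b - mul a c.
Proof. by rewrite bmulDr bmulNr. Qed.
Lemma bmul_norm a b : `|mul a b| <= `|a| * `|b|.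
Proof. by case: BA. Qed.

Lemma in_dual_comb (k : K) (f g : A -> K) : in_dual f -> in_dual g ->
  in_dual (fun x => k * f x + g x).
Proof.
move=> [lf [Mf bf]] [lg [Mg bg]]; split.
  move=> c x y _ _; rewrite lf // lg //; ring.
exists (`|k| * Mf + Mg) => x _.
apply: le_trans (ler_normD _ _) _; rewrite normrM mulrDl -mulrA.
apply: lerD; last exact: bg.
by apply: ler_wpM2l => //; apply: bf.
Qed.

Lemma in_dual_sub (f g : A -> K) : in_dual f -> in_dual g -> in_dual (f \- g).
Proof.
move=> df dg; have := in_dual_comb (-1) _ _ dg df.
have -> : (fun x => -1 * g x + f x) = f \- g.
  by apply: funext => x /=; rewrite mulN1r addrC.
by [].
Qed.

Lemma in_dual0 : in_dual (fun _ : A => 0 : K).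
Proof.
split; first by move=> c x y _ _; rewrite mulr0 addr0.
by exists 0 => x _; rewrite normr0 mul0r.
Qed.

Lemma in_dual_r a (f : A -> K) : in_dual f -> in_dual (fun x => f (mul x a)).
Proof.
move=> [lf [Mf /bnd_norm bf]]; split.
  by move=> c x y _ _; case: BA => _ h _ _; rewrite h lf.
exists (`|Mf| * `|a|) => x _.
apply: le_trans (bf _ I) _; rewrite -mulrA [`|a| * _]mulrC.
by apply: ler_wpM2l => //; exact: bmul_norm.
Qed.

Lemma in_dual_l a (f : A -> K) : in_dual f -> in_dual (fun x => f (mul a x)).
Proof.
move=> [lf [Mf /bnd_norm bf]]; split.
  by move=> c x y _ _; case: BA => _ _ h _; rewrite h lf.
exists (`|Mf| * `|a|) => x _.
apply: le_trans (bf _ I) _; rewrite -mulrA.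
by apply: ler_wpM2l => //; exact: bmul_norm.
Qed.


Lemma case_ii (I : set A) : closed_ideal mul I -> weakly_amenable mul ->
  splits_ideal mul I -> H1_dual_trivial mul I.
Proof.
move=> [I0 Ilin _ Il Ir] wa [s [sco sI slin smod [Cs sbd]]] D [Dl Da [C DC] Dlb].
have s0 : s 0 = 0.
  have := slin 1 0 0; rewrite !scale1r addr0 => h.
  by apply: (addrI (s 0)); rewrite addr0 -h.
have Ineg x : I x -> I (- x).
  by move=> Ix; rewrite -scaleN1r -[_ *: x]addr0; apply: Ilin.
pose P x := x - s x.
have IP x : I (P x) by rewrite /P -opprB; apply: Ineg.
have sIx x : I x -> s x = 0 by move=> Ix; rewrite -s0; apply: sco; rewrite subr0.
have PI x : I x -> P x = x by move=> Ix; rewrite /P sIx // subr0.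
have Plin k x y : P (k *: x + y) = k *: P x + P y.
  by rewrite /P slin scalerBr opprD addrACA.
have Pr x a : P (mul x a) = mul (P x) a by rewrite /P (smod a x).2 bmulBl.
have Pl a x : P (mul a x) = mul a (P x) by rewrite /P (smod a x).1 bmulBr.
have Pb x : `|P x| <= (1 + `|Cs|) * `|x|.
  rewrite /P mulrDl mul1r; apply: le_trans (ler_normB _ _) _; apply: lerD => //.
  by have := le_normK (sbd x 0 I0); rewrite addr0 normrM normr_id.
pose D' a x := D a (P x).
have [f [fl [M fb] fD]] : inner_into_dual mul setT D'.
  apply: wa; split.
  - by move=> a k x y _ _; rewrite /D' Plin Dl.
  - by move=> k a b x _; rewrite /D' Da.
  - exists (`|C| * (1 + `|Cs|)) => a x _.
    have h := le_normK (DC a (P x) (IP x)); rewrite !normrM !normr_id in h.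
    apply: le_trans h _; rewrite -!mulrA; apply: ler_wpM2l => //.
    rewrite mulrCA; apply: ler_wpM2l => //.
  - by move=> a b x _; rewrite /D' (Dlb _ _ _ (IP x)) Pr Pl.
exists f; split.
- by move=> k x y _ _; apply: fl.
- by exists M => x _; apply: fb.
- by move=> a x Ix; have := fD a x Logic.I; rewrite /D' PI.
Qed.

Lemma case_i (I : set A) : closed_ideal mul I -> weakly_amenable mul ->
  splits_annihilator mul I -> H1_dual_trivial mul I.
Proof.
move=> [I0 Ilin _ Il Ir] wa [S [Sdual [Sco Sann Slin Smod [Cs Sbd]]]] D [Dl Da [C DC] Dlb].
have Scong (f g : A -> K) : in_dual f -> in_dual g -> (forall x, I x -> f x = g x) -> S f = S g.
  move=> df dg fg; apply: Sco => //; split; first exact: in_dual_sub.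
  by move=> x Ix /=; rewrite fg // subrr.
pose Ma (a : A) : R := complex.Re (`|C| * `|a|).
have MaE (a : A) : (Ma a)%:C = `|C| * `|a|.
  by rewrite /Ma RRe_real // ger0_real // mulr_ge0.
have ext (a : A) : exists F : A -> K, [/\ forall k x y, F (k *: x + y) = k * F x + F y,
    forall x, I x -> F x = D a x & forall x, `|F x| <= (Ma a)%:C * `|x|].
  apply: complex_HB => //.
  - by rewrite -ler0c MaE mulr_ge0.
  - by move=> k x y Ix Iy; apply: Dl.
  - by move=> x Ix; rewrite MaE; have := le_normK (DC a x Ix); rewrite !normrM !normr_id.
have [E hE] := choice ext.
have Edual a : in_dual (E a).
  have [El _ Eb] := hE a; split; first by move=> k x y _ _; apply: El.
  by exists (Ma a)%:C => x _; apply: Eb.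
have EI a x : I x -> E a x = D a x by case: (hE a) => _ h _; apply: h.
pose Dt a := S (E a).
have ann0 : annihilator I (fun _ : A => 0 : K) by split; [exact: in_dual0|].
have [phi [phil [M phib] phiD]] : inner_into_dual mul setT Dt.
  apply: wa; split.
  - by move=> a; have [l _] := Sdual _ (Edual a); exact: l.
  - move=> k a b x _; rewrite /Dt.
    rewrite (Scong _ _ (Edual _) (in_dual_comb k _ _ (Edual a) (Edual b))); last first.
      by move=> y Iy; rewrite !EI // Da.
    by rewrite Slin.
  - exists (Cs * `|C|) => a x _.
    have bnd : bounded_by_on setT (E a \+ (fun _ : A => 0 : K)) (Ma a)%:C.
      by move=> y _ /=; rewrite addr0; case: (hE a) => _ _; apply.
    have := Sbd (E a) _ _ (Edual a) ann0 bnd x Logic.I.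
    by rewrite MaE /Dt !mulrA.
  - move=> a b x _; rewrite /Dt.
    have d1 := in_dual_r a _ (Edual b); have d2 := in_dual_l b _ (Edual a).
    rewrite (Scong (E (mul a b)) _ (Edual _) (in_dual_comb 1 _ _ d1 d2)); last first.
      move=> y Iy; rewrite mul1r !EI ?Dlb //; [exact: Il|exact: Ir].
    rewrite Slin // (Smod a (E b) (Edual b)).1 (Smod b (E a) (Edual a)).2 /=.
    by rewrite mul1r.
exists phi; split.
- by move=> k x y _ _; apply: phil.
- by exists M => x _; apply: phib.
- move=> a x Ix; rewrite -phiD // /Dt -(EI a x Ix).
  apply/eqP; rewrite eq_sym -subr_eq0; apply/eqP.
  exact: (proj2 (Sann _ (Edual a)) x Ix).
Qed.

End Main.

Theorem theorem3p1 (R : realType) (A : completeNormedModType R[i])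
  (mul : A -> A -> A) :
  banach_algebra mul ->
  weakly_amenable mul ->
  (forall I : set A, closed_ideal mul I ->
     splits_annihilator mul I \/ splits_ideal mul I) ->
  ideally_amenable mul.
Proof.
move=> BA wa sp I cI; case: (sp I cI) => h.
- exact: case_i.
- exact: case_ii.
Qed.
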